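(* Let $r=\max\{\eta_a,\eta_b\}$, $\alpha=\max\{\sigma_{\max}(U):U\in B(V_*,r)\}$, $L=6\alpha^2\max\{|\lambda_1|,|\lambda_{\max}|\}$ and $\hat L=\frac{2L}{3\alpha}$. Then for all $U_i,U_j\in B(V_*,r)$, $$\|\mathcal{A}_{U_i}U_i-\mathcal{A}_{U_j}U_j\|\leqslant L\|U_i-U_j\|,\qquad \|\mathcal{A}_{U_i}-\mathcal{A}_{U_j}\|\leqslant\hat L\|U_i-U_j\|.$$
   Context: Let $\mathcal{V}^{N_g}$ be a real Hilbert space of finite dimension $N_g$ with inner product $(\cdot,\cdot)$, and let $H:\mathcal{V}^{N_g}\to\mathcal{V}^{N_g}$ be a self-adjoint linear operator with eigenvalues $\lambda_1\leqslant\cdots\leqslant\lambda_{N_g}$, $\lambda_{\max}=\lambda_{N_g}$, $\lambda_1<0$. Fix $N<N_g$ with $\lambda_N<\lambda_{N+1}$. Elements of $(\mathcal{V}^{N_g})^N$ are written $U=(u_1,\dots,u_N)$; $U^\top V=((u_i,v_j))_{i,j=1}^N$; for a real $N\times N$ matrix $A=(a_{kj})$, $UA$ has $j$-th component $\sum_k a_{kj}u_k$; $HU=(Hu_1,\dots,Hu_N)$; $\|U\|=\operatorname{tr}(U^\top U)^{1/2}$; $\sigma_{\max}(U)=\sqrt{\lambda_{\max}(U^\top U)}$. Set $\nabla E(U)=HU$. For $U$, $\mathcal{A}_U=\nabla E(U)U^\top-U\nabla E(U)^\top$ is the linear operator on $\mathcal{V}^{N_g}$ given by $\mathcal{A}_Uw=\sum_{i=1}^N\big(Hu_i\,(u_i,w)-u_i\,(Hu_i,w)\big)$,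 applied componentwise to elements of $(\mathcal{V}^{N_g})^N$; for linear operators on $\mathcal{V}^{N_g}$, $\|\cdot\|$ is the Hilbert–Schmidt norm (so $\|\mathcal{A}_U\|^2=-\operatorname{tr}(\mathcal{A}_U^2)$). Let $V_*$ satisfy $V_*^\top V_*=I_N$, $HV_*=V_*\operatorname{diag}(\lambda_1,\dots,\lambda_N)$. $\mathcal{O}^N$ denotes the $N\times N$ orthogonal matrices, $\operatorname{dist}([U],[V_*])=\inf_{Q\in\mathcal{O}^N}\|UQ-V_*\|$, $B(U,\eta)=\{W:\|W-U\|\leqslant\eta\}$, $B([V_*],\eta)=\{W:\operatorname{dist}([W],[V_*])\leqslant\eta\}$. Fix constants $\eta_a,\eta_b,\delta^*>0$ such that (as asserted in the paper) there is a unique function $\hat g:B(V_*,\eta_a)\times[0,\delta^*]\to B(V_*,\eta_b)$ with $\hat g(U,s)-U=-s\,\mathcal{A}_{\frac{\hat g(U,s)+U}{2}}\frac{\hat g(U,s)+U}{2}$, and a unique function $g:B([V_*],\eta_a)\times[0,\delta^*]\to B([V_*],\eta_b)$ with $g(U,s)=\hat g(U,s)-s\nabla E(\hat g(U,s))(I_N-\hat g(U,s)^\top\hat g(U,s))$. *)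

(* Defs.v *)
From HB Require Import structures.
From mathcomp Require Import all_boot all_order all_algebra.
From mathcomp Require Import all_classical all_reals.
Set Implicit Arguments. Unset Strict Implicit. Unset Printing Implicit Defensive.
Import Order.TTheory GRing.Theory Num.Theory.
Local Open Scope ring_scope.
Local Open Scope classical_set_scope.

(* The Hilbert space V^{N_g} is modelled as R^{N_g} (column vectors) with the
   standard inner product; an element U of (V^{N_g})^N is an N_g x N matrix
   whose j-th column is u_j. Then U^T V is the matrix transpose product, UA is
   the matrix product, HU is H *m U. *)

(* Frobenius norm ||U|| = tr(U^T U)^{1/2}; on square matrices (operators) this
   is the Hilbert-Schmidt norm. *)
Definition frob (R : realType) (m n : nat) (U : 'M[R]_(m, n)) : R :=
  Num.sqrt (\tr (U^T *m U)).

Definition lambda_max (R : realType) (n : nat) (A : 'M[R]_n) : R :=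
  sup [set a : R | eigenvalue A a].

Definition sigma_max (R : realType) (m n : nat) (U : 'M[R]_(m, n)) : R :=
  Num.sqrt (lambda_max (U^T *m U)).

Definition opA (R : realType) (Ng N : nat) (H : 'M[R]_Ng) (U : 'M[R]_(Ng, N))
  : 'M[R]_Ng := (H *m U) *m U^T - U *m (H *m U)^T.

Definition mball (R : realType) (m n : nat) (U : 'M[R]_(m, n)) (eta : R)
  : set 'M[R]_(m, n) := [set W | frob (W - U) <= eta].

Definition ghat_prop (R : realType) (Ng N : nat) (H : 'M[R]_Ng)
  (Vs : 'M[R]_(Ng, N)) (eta_a eta_b delta : R)
  (gh : 'M[R]_(Ng, N) -> R -> 'M[R]_(Ng, N)) : Prop :=
  forall U s, mball Vs eta_a U -> 0 <= s <= delta ->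
    mball Vs eta_b (gh U s) /\
    gh U s - U = - (s *: (opA H ((2%:R)^-1 *: (gh U s + U))
                          *m ((2%:R)^-1 *: (gh U s + U)))).

(* Main.v *)
Require Import Defs.
From HB Require Import structures.
From mathcomp Require Import all_boot all_order all_algebra.
From mathcomp Require Import all_classical all_reals.
From mathcomp Require Import ring lra.
Set Implicit Arguments. Unset Strict Implicit. Unset Printing Implicit Defensive.
Import Order.TTheory GRing.Theory Num.Theory.
Local Open Scope ring_scope.
Local Open Scope classical_set_scope.


Definition ip (R : realType) m n (X Y : 'M[R]_(m, n)) : R := \tr (X^T *m Y).

Lemma ipE (R : realType) m n (X Y : 'M[R]_(m, n)) :
  ip X Y = \sum_i \sum_j X i j * Y i j.
Proof.
rewrite /ip /mxtrace exchange_big /=; apply: eq_bigr => j _.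
by rewrite mxE; apply: eq_bigr => i _; rewrite mxE.
Qed.

Lemma ipC (R : realType) m n (X Y : 'M[R]_(m, n)) : ip X Y = ip Y X.
Proof. by rewrite !ipE; apply: eq_bigr => i _; apply: eq_bigr => j _; rewrite mulrC. Qed.

Lemma ipDr (R : realType) m n (X Y Z : 'M[R]_(m, n)) : ip X (Y + Z) = ip X Y + ip X Z.
Proof. by rewrite /ip mulmxDr mxtraceD. Qed.

Lemma ipDl (R : realType) m n (X Y Z : 'M[R]_(m, n)) : ip (Y + Z) X = ip Y X + ip Z X.
Proof. by rewrite ipC ipDr ipC (ipC X). Qed.

Lemma ipZr (R : realType) m n a (X Y : 'M[R]_(m, n)) : ip X (a *: Y) = a * ip X Y.
Proof. by rewrite /ip -scalemxAr mxtraceZ. Qed.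

Lemma ipZl (R : realType) m n a (X Y : 'M[R]_(m, n)) : ip (a *: X) Y = a * ip X Y.
Proof. by rewrite ipC ipZr ipC. Qed.

Lemma ipNl (R : realType) m n (X Y : 'M[R]_(m, n)) : ip (- X) Y = - ip X Y.
Proof. by rewrite -scaleN1r ipZl mulN1r. Qed.

Lemma ipNr (R : realType) m n (X Y : 'M[R]_(m, n)) : ip X (- Y) = - ip X Y.
Proof. by rewrite ipC ipNl ipC. Qed.

Lemma ipMl (R : realType) m n p (M : 'M[R]_(m, n)) (X : 'M[R]_(n, p)) Y :
  ip (M *m X) Y = ip X (M^T *m Y).
Proof. by rewrite /ip trmx_mul mulmxA. Qed.

Lemma ip_ge0 (R : realType) m n (X : 'M[R]_(m, n)) : 0 <= ip X X.
Proof. by rewrite ipE; apply: sumr_ge0 => i _; apply: sumr_ge0 => j _; rewrite -expr2 sqr_ge0. Qed.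

Lemma ip_eq0 (R : realType) m n (X : 'M[R]_(m, n)) : ip X X = 0 -> X = 0.
Proof.
rewrite ipE => /eqP; rewrite psumr_eq0; last by move=> i _; apply: sumr_ge0 => j _; rewrite -expr2 sqr_ge0.
move=> /allP H; apply/matrixP => i j; rewrite mxE.
have /H /= : i \in index_enum 'I_m by rewrite mem_index_enum.
rewrite psumr_eq0; last by move=> k _; rewrite -expr2 sqr_ge0.
move=> /allP /(_ j) /=; rewrite mem_index_enum => /(_ isT).
by rewrite mulf_eq0 orbb => /eqP.
Qed.

Lemma disc (R : realType) (a b c : R) : 0 <= c ->
  (forall t, 0 <= a + 2%:R * b * t + c * t ^+ 2) -> b ^+ 2 <= a * c.
Proof.
move=> c0 H; have a0 : 0 <= a by have := H 0; rewrite mulr0 addr0 expr0n /= mulr0 addr0.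
have [cz|cp] := eqVneq c 0.
  have [bz|bn] := eqVneq b 0; first by rewrite bz cz expr0n /= mulr0.
  have := H (- (a + 1) / (2%:R * b)); rewrite cz mul0r addr0.
  have -> : 2%:R * b * (- (a + 1) / (2%:R * b)) = - (a + 1).
    by field; rewrite bn ?andbT ?pnatr_eq0.
  lra.
have cg : 0 < c by rewrite lt_def cp c0.
have := H (- b / c).
have -> : a + 2%:R * b * (- b / c) + c * (- b / c) ^+ 2 = a - b ^+ 2 / c.
  by field; rewrite gt_eqF.
rewrite subr_ge0 ler_pdivrMr //.
Qed.

Lemma CS (R : realType) m n (X Y : 'M[R]_(m, n)) : ip X Y ^+ 2 <= ip X X * ip Y Y.
Proof.
apply: disc; first exact: ip_ge0.
move=> t; have := ip_ge0 (X + t *: Y).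
by rewrite !ipDl !ipDr !ipZl !ipZr (ipC Y X); lra.
Qed.


Lemma frobE (R : realType) m n (X : 'M[R]_(m, n)) : frob X = Num.sqrt (ip X X).
Proof. by []. Qed.

Lemma frob_ge0 (R : realType) m n (X : 'M[R]_(m, n)) : 0 <= frob X.
Proof. exact: sqrtr_ge0. Qed.

Lemma frob_sq (R : realType) m n (X : 'M[R]_(m, n)) : frob X ^+ 2 = ip X X.
Proof. by rewrite frobE sqr_sqrtr // ip_ge0. Qed.

Lemma ip_le_frob (R : realType) m n (X Y : 'M[R]_(m, n)) : ip X Y <= frob X * frob Y.
Proof.
have h0 : 0 <= frob X * frob Y by rewrite mulr_ge0 ?frob_ge0.
have : ip X Y ^+ 2 <= (frob X * frob Y) ^+ 2 by rewrite exprMn !frob_sq CS.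
move=> h; have [l|l] := lerP (ip X Y) 0; first by apply: le_trans l h0.
by rewrite -(ler_pXn2r (n:=2)) // nnegrE ltW.
Qed.

Lemma frobD (R : realType) m n (X Y : 'M[R]_(m, n)) : frob (X + Y) <= frob X + frob Y.
Proof.
rewrite -(ler_pXn2r (n:=2)) ?nnegrE ?addr_ge0 ?frob_ge0 //.
rewrite frob_sq ipDl !ipDr (ipC Y X) sqrrD !frob_sq.
have := ip_le_frob X Y; lra.
Qed.

Lemma frobN (R : realType) m n (X : 'M[R]_(m, n)) : frob (- X) = frob X.
Proof. by rewrite !frobE ipNl ipNr opprK. Qed.

Lemma frobB (R : realType) m n (X Y : 'M[R]_(m, n)) : frob (X - Y) <= frob X + frob Y.
Proof. by rewrite -(frobN Y); apply: frobD. Qed.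

Lemma frob_tr (R : realType) m n (X : 'M[R]_(m, n)) : frob X^T = frob X.
Proof. by rewrite !frobE /ip trmxK mxtrace_mulC. Qed.

Lemma frob0 (R : realType) m n : frob (0 : 'M[R]_(m, n)) = 0.
Proof. by rewrite frobE /ip mulmx0 linear0 sqrtr0. Qed.

Lemma frob_eq0 (R : realType) m n (X : 'M[R]_(m, n)) : frob X = 0 -> X = 0.
Proof. by move=> h; apply: ip_eq0; rewrite -frob_sq h expr0n. Qed.

Lemma ip_col (R : realType) m n (X : 'M[R]_(m, n)) : ip X X = \sum_j ip (col j X) (col j X).
Proof.
rewrite ipE exchange_big /=; apply: eq_bigr => j _; rewrite ipE.
by apply: eq_bigr => i _; rewrite big_ord1 !mxE.
Qed.

Lemma ip_row (R : realType) m n (X : 'M[R]_(m, n)) : ip X X = \sum_i ip (row i X) (row i X).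
Proof.
rewrite ipE; apply: eq_bigr => i _; rewrite ipE big_ord1.
by apply: eq_bigr => j _; rewrite !mxE.
Qed.

Lemma col_mulmx (R : realType) m n p (A : 'M[R]_(m, n)) (B : 'M[R]_(n, p)) j :
  col j (A *m B) = A *m col j B.
Proof. by apply/matrixP => i k; rewrite !mxE; apply: eq_bigr => l _; rewrite !mxE. Qed.

Lemma submult_col (R : realType) m n (M : 'M[R]_(m, n)) (x : 'cV[R]_n) :
  ip (M *m x) (M *m x) <= ip M M * ip x x.
Proof.
rewrite ip_row (ip_row M) mulr_suml; apply: ler_sum => i _.
have -> : ip (row i (M *m x)) (row i (M *m x)) = ip (row i M)^T x ^+ 2.
  rewrite ipE big_ord1 big_ord1 -expr2; congr (_ ^+ 2).
  rewrite ipE !mxE; apply: eq_bigr => k _; rewrite big_ord1 !mxE //.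
have -> : ip (row i M) (row i M) = ip (row i M)^T (row i M)^T.
  by rewrite -!frob_sq frob_tr.
exact: CS.
Qed.

Lemma submult (R : realType) m n p (M : 'M[R]_(m, n)) (X : 'M[R]_(n, p)) :
  ip (M *m X) (M *m X) <= ip M M * ip X X.
Proof.
rewrite ip_col (ip_col X) mulr_sumr; apply: ler_sum => j _.
by rewrite col_mulmx; apply: submult_col.
Qed.

Definition opb (R : realType) m n (M : 'M[R]_(m, n)) (c : R) :=
  forall p (B : 'M[R]_(n, p)), frob (M *m B) <= c * frob B.

Lemma opb_col (R : realType) m n (M : 'M[R]_(m, n)) (c : R) : 0 <= c ->
  (forall x : 'cV[R]_n, ip (M *m x) (M *m x) <= c ^+ 2 * ip x x) -> opb M c.
Proof.
move=> c0 H p B; rewrite -(ler_pXn2r (n:=2)) ?nnegrE ?mulr_ge0 ?frob_ge0 //.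
rewrite exprMn !frob_sq ip_col (ip_col B) mulr_sumr; apply: ler_sum => j _.
by rewrite col_mulmx.
Qed.

Lemma opb_tr (R : realType) m n (M : 'M[R]_(m, n)) (c : R) : 0 <= c ->
  opb M c -> opb M^T c.
Proof.
move=> c0 H p B; set f := frob (M^T *m B).
have h : f ^+ 2 <= c * frob B * f.
  rewrite frob_sq ipMl trmxK.
  apply: le_trans (ip_le_frob _ _) _.
  rewrite (mulrC c) -mulrA ler_wpM2l ?frob_ge0 //.
have [f0|fp] := eqVneq f 0; first by rewrite f0 mulr_ge0 ?frob_ge0.
have fp' : 0 < f by rewrite lt_def fp frob_ge0.
by rewrite -(ler_pM2r fp') -expr2.
Qed.

Lemma opb_right (R : realType) m n p (M : 'M[R]_(m, n)) (c : R) (B : 'M[R]_(p, m)) :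
  opb M^T c -> frob (B *m M) <= c * frob B.
Proof. by move=> H; rewrite -frob_tr trmx_mul -(frob_tr B); apply: H. Qed.


Definition Sray (R : realType) m n (U : 'M[R]_(m, n)) : set R :=
  [set ip (U *m x) (U *m x) | x in [set x : 'cV[R]_n | ip x x = 1]].

Definition mu (R : realType) m n (U : 'M[R]_(m, n)) : R := sup (Sray U).

Lemma unit_vec (R : realType) n : (0 < n)%N -> exists x : 'cV[R]_n, ip x x = 1.
Proof.
move=> hn; exists (delta_mx (Ordinal hn) 0).
rewrite /ip trmx_delta mul_delta_mx /mxtrace big_ord1 mxE !eqxx //.
Qed.

Lemma Sray_ne (R : realType) m n (U : 'M[R]_(m, n)) : (0 < n)%N -> Sray U !=set0.
Proof. by move=> /(unit_vec R) [x hx]; exists (ip (U *m x) (U *m x)); exists x. Qed.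

Lemma Sray_ub (R : realType) m n (U : 'M[R]_(m, n)) : ubound (Sray U) (ip U U).
Proof.
move=> y [x /= hx <-]; have := submult_col U x; by rewrite hx mulr1.
Qed.

Lemma Sray_sup (R : realType) m n (U : 'M[R]_(m, n)) : (0 < n)%N -> has_sup (Sray U).
Proof. by move=> hn; split; [apply: Sray_ne | exists (ip U U); apply: Sray_ub]. Qed.

Lemma Sray_le (R : realType) m n (U : 'M[R]_(m, n)) y : (0 < n)%N -> Sray U y -> y <= mu U.
Proof. by move=> hn hy; apply: sup_upper_bound => //; apply: Sray_sup. Qed.

Lemma mu_ge0 (R : realType) m n (U : 'M[R]_(m, n)) : (0 < n)%N -> 0 <= mu U.
Proof.
move=> hn; have [y hy] := Sray_ne U hn; apply: le_trans (Sray_le hn hy).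
by case: hy => x _ <-; apply: ip_ge0.
Qed.

Lemma mu_le (R : realType) m n (U : 'M[R]_(m, n)) : (0 < n)%N -> mu U <= ip U U.
Proof. by move=> hn; apply: ge_sup; [apply: Sray_ne | apply: Sray_ub]. Qed.

Lemma ray (R : realType) m n (U : 'M[R]_(m, n)) (x : 'cV[R]_n) : (0 < n)%N ->
  ip (U *m x) (U *m x) <= mu U * ip x x.
Proof.
move=> hn; have [x0|xn] := eqVneq (ip x x) 0.
  by rewrite x0 (ip_eq0 x0) mulmx0 mulr0 -frob_sq frob0 expr0n.
have k0 : 0 < ip x x by rewrite lt_def xn ip_ge0.
set k := frob x; have kk : k ^+ 2 = ip x x by rewrite frob_sq.
have kn : k != 0 by apply: contra xn; rewrite -kk => /eqP ->; rewrite expr0n.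
have hy : ip (k^-1 *: x) (k^-1 *: x) = 1.
  by rewrite ipZl ipZr -kk; field.
have := @Sray_le R m n U (ip (U *m (k^-1 *: x)) (U *m (k^-1 *: x))) hn (ex_intro2 _ _ (k^-1 *: x) hy erefl).
rewrite -scalemxAr ipZl ipZr -kk => h.
have e : ip (U *m x) (U *m x) = k ^+ 2 * (k^-1 * (k^-1 * ip (U *m x) (U *m x))).
  by field.
rewrite e mulrC ler_wpM2r ?sqr_ge0 //.
Qed.


Lemma mu_eig (R : realType) m n (U : 'M[R]_(m, n)) : (0 < n)%N ->
  eigenvalue (U^T *m U) (mu U).
Proof.
move=> hn; set B := (mu U)%:M - U^T *m U.
have BT : B^T = B by rewrite /B linearB /= tr_scalar_mx trmx_mul trmxK.
have beta : forall x : 'cV[R]_n,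
    ip x (B *m x) = mu U * ip x x - ip (U *m x) (U *m x).
  by move=> x; rewrite /B mulmxBl ipDr ipNr mul_scalar_mx ipZr -mulmxA ipMl.
have bge : forall x : 'cV[R]_n, 0 <= ip x (B *m x).
  by move=> x; rewrite beta subr_ge0 ray.
have bsym : forall x y : 'cV[R]_n, ip y (B *m x) = ip x (B *m y).
  by move=> x y; rewrite -{1}BT -ipMl ipC.
have key : forall x : 'cV[R]_n, ip (B *m x) (B *m x) <= mu U * ip x (B *m x).
  move=> x; set f := ip (B *m x) (B *m x).
  have hf : f ^+ 2 <= ip x (B *m x) * (mu U * f).
    have e : ip x (B *m (B *m x)) = f by rewrite /f ipMl BT.
    have hd : forall t, 0 <= ip x (B *m x) + 2%:R * ip x (B *m (B *m x)) * t
                          + ip (B *m x) (B *m (B *m x)) * t ^+ 2.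
      move=> t; have := bge (x + t *: (B *m x)).
      rewrite mulmxDr ipDl !ipDr -scalemxAr !ipZl !ipZr (bsym x (B *m x)).
      by lra.
    have := disc (bge (B *m x)) hd; rewrite e => h; apply: le_trans h _.
    apply: ler_wpM2l; first exact: bge.
    rewrite beta -/f; have := ip_ge0 (U *m (B *m x)); lra.
  have f0 : 0 <= f by apply: ip_ge0.
  have [fz|fp] := eqVneq f 0; first by rewrite fz mulr_ge0 ?mu_ge0 ?bge.
  have fp' : 0 < f by rewrite lt_def fp f0.
  rewrite -(ler_pM2r fp') -expr2; apply: le_trans hf _.
  by rewrite mulrA (mulrC (ip x _)).
have [/eqP/det0P [v vn vB] | dn] := eqVneq (\det B) 0.
  apply/eigenvalueP; exists v => //.
  by move: vB; rewrite /B mulmxBr mul_mx_scalar => /eqP; rewrite subr_eq0 => /eqP <-.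
exfalso.
have Bu : B \in unitmx by rewrite unitmxE unitfE.
set C := invmx B; set K := ip C C * mu U.
have K0 : 0 <= K by rewrite mulr_ge0 ?ip_ge0 ?mu_ge0.
have eps0 : 0 < (K + 1)^-1 by rewrite invr_gt0; lra.
have [y [x /= hx <-] hy] := sup_adherent eps0 (Sray_sup U hn).
have h1 : ip x x <= K * ip x (B *m x).
  have e : C *m (B *m x) = x by rewrite /C mulKmx.
  have := submult C (B *m x); rewrite e => h; apply: le_trans h _.
  rewrite /K -mulrA.
  by apply: ler_wpM2l; [apply: ip_ge0 | apply: key].
move: hy; rewrite -/(mu U) => hy.
have hb : ip x (B *m x) < (K + 1)^-1 by rewrite beta hx mulr1; lra.
have hb0 := bge x.
rewrite hx in h1.
have : ip x (B *m x) * (K + 1) < 1 by rewrite -ltr_pdivlMr ?mul1r //; lra.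
nra.
Qed.

Lemma mu_max (R : realType) m n (U : 'M[R]_(m, n)) a : (0 < n)%N ->
  eigenvalue (U^T *m U) a -> a <= mu U.
Proof.
move=> hn /eigenvalueP [v vA vn]; set x := v^T.
have Ax : U^T *m U *m x = a *: x.
  have AT : (U^T *m U)^T = U^T *m U by rewrite trmx_mul trmxK.
  by rewrite /x -{1}AT -trmx_mul vA linearZ.
have := ray U x hn; rewrite ipMl mulmxA Ax ipZr.
have x0 : 0 < ip x x.
  rewrite lt_def ip_ge0 andbT; apply/eqP => /ip_eq0 h; move/eqP: vn; apply.
  by rewrite -(trmxK v) -/x h trmx0.
by rewrite ler_pM2r.
Qed.

Lemma lmax_mu (R : realType) m n (U : 'M[R]_(m, n)) : (0 < n)%N ->
  lambda_max (U^T *m U) = mu U.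
Proof.
move=> hn; apply/eqP; rewrite eq_le; apply/andP; split.
  apply: ge_sup; first by exists (mu U); apply: mu_eig.
  by move=> a; apply: mu_max.
apply: ub_le_sup; last by apply: mu_eig.
by exists (mu U) => a; apply: mu_max.
Qed.

Lemma sigma_mu (R : realType) m n (U : 'M[R]_(m, n)) : (0 < n)%N ->
  sigma_max U = Num.sqrt (mu U).
Proof. by move=> hn; rewrite /sigma_max lmax_mu. Qed.

Lemma opb_sigma (R : realType) m n (U : 'M[R]_(m, n)) : (0 < n)%N ->
  opb U (sigma_max U).
Proof.
move=> hn; apply: opb_col; first exact: sqrtr_ge0.
by move=> x; rewrite sigma_mu // sqr_sqrtr ?mu_ge0 // ray.
Qed.

Lemma sigma_le_frob (R : realType) m n (U : 'M[R]_(m, n)) : (0 < n)%N ->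
  sigma_max U <= frob U.
Proof. by move=> hn; rewrite sigma_mu // frobE ler_sqrt ?ip_ge0 // mu_le. Qed.


Lemma opb_H (R : realType) n (P : 'M[R]_n) (d : 'rV[R]_n) (h : R) :
  0 <= h -> P^T *m P = 1%:M -> (forall i, `|d 0 i| <= h) ->
  opb (P *m diag_mx d *m P^T) h.
Proof.
move=> h0 PP hd p B.
rewrite -(ler_pXn2r (n:=2)) ?nnegrE ?mulr_ge0 ?frob_ge0 // exprMn !frob_sq.
rewrite -!mulmxA ipMl (mulmxA P^T P) PP mul1mx.
set C := P^T *m B.
have -> : ip B B = ip C C.
  by rewrite /C ipMl trmxK mulmxA (mulmx1C PP) mul1mx.
rewrite !ipE mulr_sumr; apply: ler_sum => i _; rewrite mulr_sumr; apply: ler_sum => j _.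
rewrite mul_diag_mx mxE.
have : d 0 i * d 0 i <= h ^+ 2.
  by move: (hd i); rewrite ler_norml => /andP [a b]; nra.
move=> e; have : 0 <= C i j * C i j by rewrite -expr2 sqr_ge0.
nra.
Qed.

Lemma tele3 (R : realType) a b c e (X1 X2 : 'M[R]_(a, b)) (Y1 Y2 : 'M[R]_(b, c))
  (Z1 Z2 : 'M[R]_(c, e)) :
  X1 *m Y1 *m Z1 - X2 *m Y2 *m Z2 =
  (X1 - X2) *m Y1 *m Z1 + X2 *m (Y1 - Y2) *m Z1 + X2 *m Y2 *m (Z1 - Z2).
Proof.
rewrite !mulmxBl !mulmxBr !mulmxBl.
by rewrite !subrKA.
Qed.

Lemma tele2 (R : realType) a b c (X1 X2 : 'M[R]_(a, b)) (Y1 Y2 : 'M[R]_(b, c)) :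
  X1 *m Y1 - X2 *m Y2 = (X1 - X2) *m Y1 + X2 *m (Y1 - Y2).
Proof. by rewrite mulmxBl mulmxBr subrKA. Qed.

Lemma swap4 (R : realType) a b (x y z t : 'M[R]_(a, b)) :
  (x - y) - (z - t) = (x - z) - (y - t).
Proof. by rewrite !opprD addrACA. Qed.

Lemma frobD3 (R : realType) m n (X Y Z : 'M[R]_(m, n)) :
  frob (X + Y + Z) <= frob X + frob Y + frob Z.
Proof. apply: le_trans (frobD _ _) _; rewrite lerD2r; apply: frobD. Qed.

Lemma opA_tr (R : realType) Ng N (H : 'M[R]_Ng) (U : 'M[R]_(Ng, N)) :
  H^T = H -> opA H U = H *m U *m U^T - U *m U^T *m H.
Proof. by move=> HT; rewrite /opA trmx_mul HT mulmxA. Qed.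


Lemma trB (R : realType) m n (A B : 'M[R]_(m, n)) : (A - B)^T = A^T - B^T.
Proof. by apply/matrixP => i j; rewrite !mxE. Qed.

Lemma ch2 (R : realType) (x y z a b : R) : 0 <= a -> x <= a * y -> y <= b * z ->
  x <= a * (b * z).
Proof. by move=> a0 h1 h2; apply: le_trans h1 _; rewrite ler_wpM2l. Qed.

Lemma ch3 (R : realType) (x y z w a b c : R) : 0 <= a -> 0 <= b ->
  x <= a * y -> y <= b * z -> z <= c * w -> x <= a * (b * (c * w)).
Proof. by move=> a0 b0 h1 h2 h3; exact: (ch2 a0 h1 (ch2 b0 h2 h3)). Qed.

Theorem lemma4p4 (R : realType) (Ng N : nat) (H : 'M[R]_Ng) (lam : nat -> R)
  (Vs : 'M[R]_(Ng, N)) (eta_a eta_b delta : R) :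
  (0 < N)%N -> (N < Ng)%N ->
  (* H self-adjoint with eigenvalues lam 1 <= ... <= lam Ng (with multiplicity) *)
  H^T = H ->
  (exists P : 'M[R]_Ng, P^T *m P = 1%:M /\
     H = P *m diag_mx (\row_(i < Ng) lam i.+1) *m P^T) ->
  (forall i j : nat, (1 <= i)%N -> (i <= j)%N -> (j <= Ng)%N -> lam i <= lam j) ->
  lam 1%N < 0 ->
  lam N < lam N.+1 ->
  Vs^T *m Vs = 1%:M ->
  H *m Vs = Vs *m diag_mx (\row_(j < N) lam j.+1) ->
  0 < eta_a -> 0 < eta_b -> 0 < delta ->
  (exists gh, ghat_prop H Vs eta_a eta_b delta gh /\
     forall gh', ghat_prop H Vs eta_a eta_b delta gh' ->
       forall U s, mball Vs eta_a U -> 0 <= s <= delta -> gh' U s = gh U s) ->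
  let r := Num.max eta_a eta_b in
  let alpha := sup [set sigma_max U | U in mball Vs r] in
  let L := 6%:R * alpha ^+ 2 * Num.max `|lam 1%N| `|lam Ng| in
  let Lhat := (2%:R * L) / (3%:R * alpha) in
  forall Ui Uj, mball Vs r Ui -> mball Vs r Uj ->
    frob (opA H Ui *m Ui - opA H Uj *m Uj) <= L * frob (Ui - Uj) /\
    frob (opA H Ui - opA H Uj) <= Lhat * frob (Ui - Uj).
Proof.
move=> hN hNg HT [P [PP HP]] mono l1 lN VV HV ea eb dl _ r alpha L Lhat Ui Uj hi hj.
set h := Num.max `|lam 1%N| `|lam Ng|.
have h0 : 0 <= h by rewrite le_max normr_ge0.
have hH : opb H h.
  rewrite HP; apply: opb_H => // i; rewrite mxE.
  have i1 : (1 <= i.+1)%N by [].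
  have iN : (i.+1 <= Ng)%N by apply: ltn_ord.
  have a := mono 1%N i.+1 (leqnn 1) i1 iN.
  have b := mono i.+1 Ng i1 iN (leqnn Ng).
  have n1 := ler_norm (- lam 1%N); have n2 := ler_norm (lam Ng).
  rewrite normrN in n1.
  rewrite /h le_max; have [s|s] := lerP 0 (lam i.+1).
    by apply/orP; right; rewrite ger0_norm //; lra.
  by apply/orP; left; rewrite ltr0_norm //; lra.
have hHT : opb H^T h by rewrite HT.
have r0 : 0 < r by rewrite lt_max ea.
have bnd : forall U, mball Vs r U -> sigma_max U <= r + frob Vs.
  move=> U hU; apply: le_trans (sigma_le_frob U hN) _.
  have -> : U = (U - Vs) + Vs by rewrite subrK.
  by apply: le_trans (frobD _ _) _; rewrite lerD2r; exact: hU.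
have ub : has_ubound [set sigma_max U | U in mball Vs r].
  by exists (r + frob Vs) => y [U hU <-]; exact: bnd.
have sa : forall U, mball Vs r U -> sigma_max U <= alpha.
  by move=> U hU; have := ub_le_sup ub; apply; exists U.
have hV : mball Vs r Vs by rewrite /mball /= subrr frob0 ltW.
have a1 : 1 <= alpha.
  apply: le_trans (sa _ hV); rewrite sigma_mu // -sqrtr1 ler_sqrt ?mu_ge0 //.
  have [x hx] := unit_vec R hN.
  apply: (@Sray_le R Ng N Vs 1 hN); exists x => //; by rewrite ipMl mulmxA VV mul1mx hx.
have a0 : 0 <= alpha by apply: le_trans a1; apply: ler01.
have opU : forall U, mball Vs r U -> opb U alpha.
  move=> U hU p B; apply: le_trans (@opb_sigma R Ng N U hN p B) _.
  by rewrite ler_wpM2r ?frob_ge0 ?sa.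
have opUT : forall U, mball Vs r U -> opb U^T alpha.
  by move=> U hU; apply: opb_tr => //; apply: opU.
have opUTT : forall U, mball Vs r U -> opb U^T^T alpha.
  by move=> U hU; rewrite trmxK; apply: opU.
set D := Ui - Uj.
have UDT : forall U, mball Vs r U -> frob (U *m D^T) <= alpha * frob D.
  move=> U hU; rewrite -frob_tr trmx_mul trmxK.
  by apply: opb_right; apply: opUTT.
have fD0 := frob_ge0 D.
split.
  rewrite !(opA_tr _ HT) !mulmxBl swap4.
  have E1 : H *m Ui *m Ui^T *m Ui - H *m Uj *m Uj^T *m Uj =
      H *m D *m Ui^T *m Ui + H *m Uj *m D^T *m Ui + H *m Uj *m Uj^T *m D.
    by rewrite tele3 trB [H *m (Ui - Uj)]mulmxBr.
  have E2 : Ui *m Ui^T *m H *m Ui - Uj *m Uj^T *m H *m Uj =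
      D *m Ui^T *m H *m Ui + Uj *m D^T *m H *m Ui + Uj *m Uj^T *m H *m D.
    by rewrite -!(mulmxA _ _ H) tele3 trB [(Ui^T - Uj^T) *m H]mulmxBl.
  rewrite E1 E2; apply: le_trans (frobB _ _) _.
  have T1 : frob (H *m D *m Ui^T *m Ui) <= alpha * (alpha * (h * frob D)).
    exact: (ch3 a0 a0 (opb_right _ (opUT _ hi)) (opb_right _ (opUTT _ hi)) (hH _ _)).
  have T2 : frob (H *m Uj *m D^T *m Ui) <= alpha * (h * (alpha * frob D)).
    apply: (ch3 a0 h0 (opb_right _ (opUT _ hi))) (UDT _ hj).
    by rewrite -mulmxA; apply: hH.
  have T3 : frob (H *m Uj *m Uj^T *m D) <= h * (alpha * (alpha * frob D)).
    by rewrite -!mulmxA; exact: (ch3 h0 a0 (hH _ _) (opU _ hj _ _) (opUT _ hj _ _)).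
  have T4 : frob (D *m Ui^T *m H *m Ui) <= alpha * (h * (alpha * frob D)).
    exact: (ch3 a0 h0 (opb_right _ (opUT _ hi)) (opb_right _ hHT) (opb_right _ (opUTT _ hi))).
  have T5 : frob (Uj *m D^T *m H *m Ui) <= alpha * (h * (alpha * frob D)).
    exact: (ch3 a0 h0 (opb_right _ (opUT _ hi)) (opb_right _ hHT) (UDT _ hj)).
  have T6 : frob (Uj *m Uj^T *m H *m D) <= alpha * (alpha * (h * frob D)).
    by rewrite -!mulmxA; exact: (ch3 a0 a0 (opU _ hj _ _) (opUT _ hj _ _) (hH _ _)).
  have S1 := frobD3 (H *m D *m Ui^T *m Ui) (H *m Uj *m D^T *m Ui) (H *m Uj *m Uj^T *m D).
  have S2 := frobD3 (D *m Ui^T *m H *m Ui) (Uj *m D^T *m H *m Ui) (Uj *m Uj^T *m H *m D).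
  rewrite /L -/h -/D.
  have -> : 6%:R * alpha ^+ 2 * h * frob D =
    3%:R * (alpha * (alpha * (h * frob D))) + 3%:R * (alpha * (alpha * (h * frob D))) by ring.
  have e1 : alpha * (h * (alpha * frob D)) = alpha * (alpha * (h * frob D)) by ring.
  have e2 : h * (alpha * (alpha * frob D)) = alpha * (alpha * (h * frob D)) by ring.
  rewrite e1 in T2 T4 T5; rewrite e2 in T3.
  lra.
rewrite !(opA_tr _ HT) swap4.
have E3 : H *m Ui *m Ui^T - H *m Uj *m Uj^T = H *m D *m Ui^T + H *m Uj *m D^T.
  by rewrite tele2 trB [H *m (Ui - Uj)]mulmxBr.
have E4 : Ui *m Ui^T *m H - Uj *m Uj^T *m H = D *m Ui^T *m H + Uj *m D^T *m H.
  by rewrite -mulmxBl tele2 trB mulmxDl.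
rewrite E3 E4; apply: le_trans (frobB _ _) _.
have T1 : frob (H *m D *m Ui^T) <= alpha * (h * frob D).
  exact: (ch2 a0 (opb_right _ (opUTT _ hi)) (hH _ _)).
have T2 : frob (H *m Uj *m D^T) <= h * (alpha * frob D).
  by rewrite -mulmxA; exact: (ch2 h0 (hH _ _) (UDT _ hj)).
have T3 : frob (D *m Ui^T *m H) <= h * (alpha * frob D).
  exact: (ch2 h0 (opb_right _ hHT) (opb_right _ (opUTT _ hi))).
have T4 : frob (Uj *m D^T *m H) <= h * (alpha * frob D).
  exact: (ch2 h0 (opb_right _ hHT) (UDT _ hj)).
have S1 := frobD (H *m D *m Ui^T) (H *m Uj *m D^T).
have S2 := frobD (D *m Ui^T *m H) (Uj *m D^T *m H).
have -> : Lhat = 4%:R * alpha * h.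
  rewrite /Lhat /L -/h; field.
  by rewrite gt_eqF //; apply: lt_le_trans a1; apply: ltr01.
rewrite -/D.
have e1 : alpha * (h * frob D) = h * (alpha * frob D) by ring.
rewrite e1 in T1.
have -> : 4%:R * alpha * h * frob D = 4%:R * (h * (alpha * frob D)) by ring.
lra.
Qed.
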